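(* There is no $\alpha\ge1$ such that $(\overline{\chi_f})_\alpha\in\Delta(\mathcal{A},\le)$; that is, the fractional clique cover number $\overline{\chi_f}$ does not extend to an element of $\Delta(\mathcal{A},\le)$.
   Context: The fractional clique cover number is $\overline{\chi_f}(G)=\chi_f(\overline{G})$, the fractional chromatic number of the complement; it belongs to $\Delta(\mathcal{G},\le)$. Graphs are finite simple undirected; $x\simeq x'$ means equal or adjacent. Strong product $G\boxtimes H$: vertex set $V(G)\times V(H)$, $(g,h)\simeq(g',h')$ iff $g\simeq g'$ and $h\simeq h'$. $H\le G$ for graphs means there is a homomorphism from $\overline{H}$ to $\overline{G}$. $\Delta(\mathcal{G},\le)$ is the set of maps $f$ from graphs to $\mathbb{R}_{\ge0}$ with $f(\text{empty})=0$, $f(K_1)=1$, additive under disjoint union, multiplicative under $\boxtimes$, and monotone under $\le$. A noncommutative graph is a subspace $S\subseteq B(\mathcal{H})$ ($\mathcal{H}$ finite-dimensional) with $I\in S$, $S^*=S$. A cohomomorphism from $T\subseteq B(\mathcal{K})$ to $S\subseteq B(\mathcal{H})$ is a finite family of linear maps $E_i:\mathcal{K}\to\mathcal{H}$ with $\sum_iE_i^*E_i=I$ and $E_i^*SE_j\subseteq T$ for all $i,j$; $T\le S$ if one exists. $\widehat{G}=\operatorname{span}\{|x\rangle\langle x'|:x\simeq x'\}\subseteq B(\mathbb{C}^{V(G)})$, $\mathcal{C}_d=\mathbb{C}I\subseteq B(\mathbb{C}^d)$. $\mathcal{A}$ is the semiring (under $\oplus,\otimes$, up to unitary isomorphism)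 generated by all $\widehat{G}$ and $\mathcal{C}_d$; its elements have the form $\bigoplus_{d=1}^r\widehat{G_d}\otimes\mathcal{C}_d$. For $f\in\Delta(\mathcal{G},\le)$, $\alpha\ge1$, $f_\alpha(\bigoplus_{d}\widehat{G_d}\otimes\mathcal{C}_d)=\sum_d f(G_d)d^\alpha$. $\Delta(\mathcal{A},\le)$ is the set of $\le$-monotone semiring homomorphisms $\mathcal{A}\to\mathbb{R}_{\ge0}$. *)

(* Defs.v *)
From HB Require Import structures.
From mathcomp Require Import all_boot all_order all_algebra.
From mathcomp Require Import complex mxtens.
From mathcomp Require Import boolp classical_sets reals exp.

Set Implicit Arguments.
Unset Strict Implicit.
Unset Printing Implicit Defensive.

Import Order.TTheory GRing.Theory Num.Theory.
Local Open Scope ring_scope.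

Record graph := Graph {
  gn : nat;
  gadj : rel 'I_gn;
  gadj_sym : symmetric gadj;
  gadj_irr : irreflexive gadj }.
Arguments gadj : clear implicits.

Definition gsim (G : graph) (x y : 'I_(gn G)) : bool := (x == y) || gadj G x y.

Definition compl_adj (G : graph) : rel 'I_(gn G) :=
  fun x y => (x != y) && ~~ gadj G x y.

Lemma compl_adj_sym G : symmetric (@compl_adj G).
Proof. by move=> x y; rewrite /compl_adj eq_sym gadj_sym. Qed.

Lemma compl_adj_irr G : irreflexive (@compl_adj G).
Proof. by move=> x; rewrite /compl_adj eqxx. Qed.

Definition gcompl (G : graph) : graph :=
  Graph (@compl_adj_sym G) (@compl_adj_irr G).

Definition independent (G : graph) (I : {set 'I_(gn G)}) : bool :=
  [forall x in I, forall y in I, ~~ gadj G x y].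

Definition frac_colouring (R : realType) (G : graph)
    (w : {set 'I_(gn G)} -> R) : Prop :=
  [/\ (forall I, 0 <= w I),
      (forall I, ~~ independent I -> w I = 0)
    & (forall v : 'I_(gn G), 1 <= \sum_(I : {set 'I_(gn G)} | v \in I) w I)].

Definition chi_f (R : realType) (G : graph) : R :=
  inf [set \sum_(I : {set 'I_(gn G)}) w I | w in @frac_colouring R G].

Definition chi_f_bar (R : realType) (G : graph) : R := chi_f R (gcompl G).

(* A subspace of 'M_n is encoded (as in mxalgebra) by a matrix whose   *)
(* row space is spanned by the mxvec's of its elements.                *)

Record ncg (R : realType) := NCG {
  ndim : nat;
  nsp : 'M[R[i]]_(ndim * ndim) }.
Arguments NCG {R} ndim nsp.

Section NCG.
Variable R : realType.
Local Notation C := R[i].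

Definition in_sp n (S : 'M[C]_(n * n)) (X : 'M[C]_n) : bool :=
  (mxvec X <= S)%MS.

Definition adjmx m n (E : 'M[C]_(m, n)) : 'M[C]_(n, m) := (map_mx conjc E)^T.

Definition ncg0 : ncg R := NCG 0 0.

Definition hatG (G : graph) : ncg R :=
  NCG (gn G) (\sum_(x : 'I_(gn G)) \sum_(y : 'I_(gn G) | gsim x y)
                <<mxvec (delta_mx x y : 'M[C]_(gn G))>>)%MS.

Definition Cd (d : nat) : ncg R := NCG d <<mxvec (1%:M : 'M[C]_d)>>%MS.

Definition dsum (S T : ncg R) : ncg R :=
  NCG (ndim S + ndim T)
   (nsp S *m lin_mx (fun X : 'M[C]_(ndim S) =>
        block_mx X 0 0 (0 : 'M[C]_(ndim T)))
    + nsp T *m lin_mx (fun Y : 'M[C]_(ndim T) =>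
        block_mx (0 : 'M[C]_(ndim S)) 0 0 Y))%MS.

Definition tens (S T : ncg R) : ncg R :=
  NCG (ndim S * ndim T)
   (\sum_(i < ndim S * ndim S) \sum_(j < ndim T * ndim T)
      <<mxvec (vec_mx (row i (nsp S)) *t vec_mx (row j (nsp T)))>>)%MS.

Definition ncg_le (T S : ncg R) : Prop :=
  exists Es : seq 'M[C]_(ndim S, ndim T),
    \sum_(E <- Es) adjmx E *m E = 1%:M /\
    forall E E', E \in Es -> E' \in Es ->
      forall X : 'M[C]_(ndim S), in_sp (nsp S) X ->
        in_sp (nsp T) (adjmx E *m X *m E').

Definition ncg_iso (S T : ncg R) : Prop :=
  exists U : 'M[C]_(ndim S, ndim T),
    [/\ adjmx U *m U = 1%:M, U *m adjmx U = 1%:M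
      & (forall X : 'M[C]_(ndim S),
          in_sp (nsp S) X = in_sp (nsp T) (adjmx U *m X *m U))].

Inductive inA : ncg R -> Prop :=
  | inA_graph G : inA (hatG G)
  | inA_Cd d : (0 < d)%N -> inA (Cd d)
  | inA_dsum S T : inA S -> inA T -> inA (dsum S T)
  | inA_tens S T : inA S -> inA T -> inA (tens S T)
  | inA_iso S T : inA S -> ncg_iso S T -> inA T.

(* Delta(A, <=): <=-monotone semiring homomorphisms A -> R_{>=0}
   (functions on isomorphism classes, i.e. invariant under unitary iso) *)
Definition DeltaA (F : ncg R -> R) : Prop :=
  [/\ (forall S T, inA S -> inA T -> ncg_iso S T -> F S = F T),
      (forall S, inA S -> 0 <= F S),
      (F ncg0 = 0 /\ F (Cd 1) = 1),
      ((forall S T, inA S -> inA T -> F (dsum S T) = F S + F T) /\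
       (forall S T, inA S -> inA T -> F (tens S T) = F S * F T))
    & (forall S T, inA S -> inA T -> ncg_le S T -> F S <= F T)].

Fixpoint realize_from (k : nat) (Gs : seq graph) : ncg R :=
  match Gs with
  | [::] => ncg0
  | G :: Gs' => dsum (tens (hatG G) (Cd k)) (realize_from k.+1 Gs')
  end.

Definition realize (Gs : seq graph) : ncg R := realize_from 1 Gs.

Fixpoint f_alpha_from (f : graph -> R) (alpha : R) (k : nat) (Gs : seq graph)
  : R :=
  match Gs with
  | [::] => 0
  | G :: Gs' => f G * (k%:R `^ alpha) + f_alpha_from f alpha k.+1 Gs'
  end.

Definition f_alpha (f : graph -> R) (alpha : R) (Gs : seq graph) : R :=
  f_alpha_from f alpha 1 Gs.

End NCG.

(* Main.v *)
Require Import Defs.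
From mathcomp Require Import all_boot all_order all_algebra.
From mathcomp Require Import complex mxtens.
From mathcomp Require Import boolp classical_sets reals exp.
From mathcomp Require Import ring zify.
Import Order.TTheory GRing.Theory Num.Theory.
Local Open Scope ring_scope.

Set Implicit Arguments.
Unset Strict Implicit.
Unset Printing Implicit Defensive.

Local Open Scope ring_scope.

Section Poly.
Variables (K : fieldType) (n : nat).
Local Notation T := {set 'I_n}.

Definition sub_ind (S z : T) : K := (S \subset z)%:R.

Definition deg_le (k : nat) (f : T -> K) :=
  {c : T -> K | (forall S : T, (k < #|S|)%N -> c S = 0) /\
                forall z, f z = \sum_S c S * sub_ind S z}.

Lemma deg_le_mono k k' f : (k <= k')%N -> deg_le k f -> deg_le k' f.
Proof.
move=> le [c [c0 fE]]; exists c; split=> // S lt; apply: c0.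
exact: leq_ltn_trans lt.
Qed.

Lemma deg_le_const (a : K) : deg_le 0 (fun _ => a).
Proof.
exists (fun S => if S == finset.set0 then a else 0); split.
  by move=> S; case: eqP => // ->; rewrite finset.cards0.
move=> z; rewrite (bigD1 finset.set0) //= eqxx big1 ?addr0.
  by rewrite /sub_ind finset.sub0set mulr1.
by move=> S /negbTE ->; rewrite mul0r.
Qed.

Lemma deg_le_sub (S : T) : deg_le #|S| (sub_ind S).
Proof.
exists (fun S' => (S' == S)%:R); split.
  by move=> S' lt; case: eqP lt => // ->; rewrite ltnn.
move=> z; rewrite (bigD1 S) //= eqxx mul1r big1 ?addr0 //.
by move=> S' /negbTE ->; rewrite mul0r.
Qed.

Lemma deg_le_scale k (a : K) f : deg_le k f -> deg_le k (fun z => a * f z).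
Proof.
move=> [c [c0 fE]]; exists (fun S => a * c S); split.
  by move=> S lt; rewrite c0 // mulr0.
by move=> z; rewrite fE mulr_sumr; apply: eq_bigr => S _; rewrite mulrA.
Qed.

Lemma deg_le_add k f g : deg_le k f -> deg_le k g -> deg_le k (fun z => f z + g z).
Proof.
move=> [c [c0 fE]] [d [d0 gE]]; exists (fun S => c S + d S); split.
  by move=> S lt; rewrite c0 // d0 // addr0.
by move=> z; rewrite fE gE -big_split; apply: eq_bigr => S _; rewrite mulrDl.
Qed.

Lemma deg_le_sum k (I : Type) (r : seq I) (g : I -> T -> K) :
  (forall i, deg_le k (g i)) -> deg_le k (fun z => \sum_(i <- r) g i z).
Proof.
move=> H; elim: r => [|i r IH].
  have [c [c0 cE]] := deg_le_const 0.
  exists c; split=> [S lt|z]; first by apply: c0; exact: leq_ltn_trans lt.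
  by rewrite big_nil; apply: cE.
have := deg_le_add (H i) IH; case=> c [c0 cE]; exists c; split=> // z.
by rewrite big_cons cE.
Qed.

Lemma deg_le_mulsub k f (S : T) : deg_le k f ->
  deg_le (k + #|S|) (fun z => f z * sub_ind S z).
Proof.
move=> [c [c0 fE]].
exists (fun S' => \sum_(U | (U :|: S) == S') c U); split.
  move=> S' lt; rewrite big1 // => U /eqP UE; apply: c0.
  rewrite -(ltn_add2r #|S|); apply: leq_trans lt _; rewrite -UE cardsU.
  exact: leq_subr.
move=> z; rewrite fE mulr_suml.
rewrite (partition_big (fun U => U :|: S) xpredT) //=.
apply: eq_bigr => S' _; rewrite mulr_suml; apply: eq_bigr => U /eqP <-.
rewrite -mulrA; congr (_ * _); rewrite /sub_ind -natrM finset.subUset.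
by case: (U \subset z); case: (S \subset z).
Qed.

Lemma deg_le_ext k f g : (forall z, f z = g z) -> deg_le k f -> deg_le k g.
Proof. by move=> fg [c [c0 cE]]; exists c; split=> // z; rewrite -fg. Qed.

Lemma deg_le_zero k : deg_le k (fun _ => 0).
Proof. exact: deg_le_mono (leq0n k) (deg_le_const 0). Qed.

Lemma deg_le_mul k m f g : deg_le k f -> deg_le m g ->
  deg_le (k + m) (fun z => f z * g z).
Proof.
move=> df [d [d0 gE]].
apply: (@deg_le_ext _ (fun z => \sum_(S <- index_enum _) d S * (f z * sub_ind S z))).
  by move=> z; rewrite gE mulr_sumr; apply: eq_bigr => S _; rewrite mulrCA.
apply: deg_le_sum => S.
case: (leqP #|S| m) => Sm.
  apply: deg_le_scale; apply: deg_le_mono (deg_le_mulsub S df).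
  by rewrite leq_add2l.
by rewrite d0 //; apply: (deg_le_ext _ (deg_le_zero _)) => z; rewrite mul0r.
Qed.
End Poly.

Section FW.
Variables (n p : nat).
Hypothesis p_pr : prime p.
Local Notation T := {set 'I_n}.
Local Notation K := 'F_p.

Definition dist (b z : T) : nat := #|(b :\: z) :|: (z :\: b)|.

Lemma dist_lin (b z : T) : (dist b z)%:R =
  \sum_(j : 'I_n) ((j \in b)%:R + (1 - 2 * (j \in b)%:R) * sub_ind K [set j] z) :> K.
Proof.
rewrite /dist -sum1_card big_mkcond natr_sum; apply: eq_bigr => j _.
rewrite /sub_ind finset.sub1set !inE.
case: (j \in b); case: (j \in z) => /=; rewrite ?mulr0 ?mul0r ?mulr1 ?mul1r ?addr0 ?add0r ?subr0 //.
by rewrite addrA -mulr2n subrr.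
Qed.

Definition Pb (b z : T) : K := \prod_(i <- iota 1 p.-1) ((dist b z)%:R - i%:R).

Lemma dist_deg (b : T) (a : K) : deg_le 1 (fun z => (dist b z)%:R + a).
Proof.
apply: deg_le_add; last exact: deg_le_mono (leq0n _) (deg_le_const _ a).
apply: deg_le_ext (fun z => esym (dist_lin b z)) _.
apply: deg_le_sum => j; apply: deg_le_add.
  exact: deg_le_mono (leq0n _) (deg_le_const _ _).
by apply: deg_le_scale; have := deg_le_sub K [set j]; rewrite cards1.
Qed.

Lemma Pb_deg (b : T) : deg_le p.-1 (Pb b).
Proof.
rewrite /Pb; have := size_iota 1 p.-1; move: (iota 1 p.-1) => r <-.
elim: r => [|i r IH].
  by apply: deg_le_ext (deg_le_const _ 1) => z; rewrite big_nil.
apply: deg_le_ext (deg_le_mul (dist_deg b (- i%:R)) IH) => z.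
by rewrite big_cons.
Qed.

Lemma Pb_self (b : T) : Pb b b != 0.
Proof.
rewrite /Pb /dist finset.setDv finset.setU0 finset.cards0 prodf_seq_neq0.
apply/allP => i; rewrite mem_iota => /andP[i0 ip] /=.
rewrite add0r oppr_eq0 -(dvdn_pcharf (pchar_Fp p_pr)).
have p0 := prime_gt0 p_pr.
apply/negP => /(dvdn_leq i0); rewrite leqNgt.
by rewrite add1n prednK // in ip; rewrite ip.
Qed.

Lemma Pb_other (b z : T) : ~~ (p %| dist b z)%N -> Pb b z = 0.
Proof.
move=> nd; apply/eqP; rewrite /Pb prodf_seq_eq0; apply/hasP.
have p0 := prime_gt0 p_pr.
exists (dist b z %% p)%N.
  rewrite mem_iota add1n prednK // ltn_mod p0 andbT lt0n.
  exact: nd.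
by rewrite /= -{1}(Fp_nat_mod p_pr) subrr.
Qed.

Lemma FW (J : {set T}) :
  (forall b b', b \in J -> b' \in J -> b != b' -> ~~ (p %| dist b b')%N) ->
  (#|J| <= #|[set S : T | (#|S| < p)%N]|)%N.
Proof.
move=> HJ.
set A := [set S : T | (#|S| < p)%N].
pose jv (i : 'I_#|J|) : T := enum_val i.
pose sv (s : 'I_#|A|) : T := enum_val s.
pose c (b : T) := sval (Pb_deg b).
pose C : 'M[K]_(#|J|, #|A|) := \matrix_(i, s) c (jv i) (sv s).
pose Mon : 'M[K]_(#|A|, #|J|) := \matrix_(s, i) sub_ind K (sv s) (jv i).
have ME : C *m Mon = diag_mx (\row_i Pb (jv i) (jv i)).
  apply/matrixP => i i'; rewrite !mxE.
  have -> : \sum_j C i j * Mon j i' = \sum_(S in A) c (jv i) S * sub_ind K S (jv i').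
    by symmetry; rewrite big_enum_val; apply: eq_bigr => s _; rewrite !mxE.
  have [c0 cE] := svalP (Pb_deg (jv i)).
  rewrite big_mkcond /= -/(c _) in c0 cE *.
  have -> : \sum_S (if S \in A then c (jv i) S * sub_ind K S (jv i') else 0)
          = \sum_S c (jv i) S * sub_ind K S (jv i').
    apply: eq_bigr => S _; case: ifP => // /negbT; rewrite inE -leqNgt => pS.
    rewrite c0 ?mul0r //; apply: leq_trans pS; rewrite prednK //.
    exact: prime_gt0.
  rewrite -cE; case: eqP => [<-|/eqP ne]; first by rewrite mulr1n.
  rewrite mulr0n; apply: Pb_other; apply: HJ; try exact: enum_valP.
  by apply/eqP => /enum_val_inj /eqP; rewrite (negbTE ne).
have Mu : (C *m Mon) \in unitmx.
  rewrite ME unitmxE det_diag unitfE; apply/prodf_neq0 => i _.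
  by rewrite mxE; apply: Pb_self.
have := mxrankM_maxl C Mon; rewrite mxrank_unit //.
move/leq_trans; apply; exact: rank_leq_col.
Qed.

End FW.

Section NatPart1.
Local Open Scope nat_scope.

Lemma sum_pow3 n : \sum_(S : {set 'I_n}) 3 ^ (n - #|S|) = 4 ^ n.
Proof.
have cS (S : {set 'I_n}) : #|S| < n.+1.
  by rewrite ltnS; have := max_card (mem S); rewrite card_ord.
rewrite (partition_big (fun S : {set 'I_n} => (inord #|S| : 'I_n.+1)) xpredT) //=.
rewrite (_ : 4 = 3 + 1) // expnDn; apply: eq_bigr => k _.
rewrite exp1n muln1.
have -> : \sum_(S : {set 'I_n} | inord #|S| == k) 3 ^ (n - #|S|) = \sum_(S : {set 'I_n} | #|S| == k) 3 ^ (n - k).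
  apply: eq_big => S.
    by rewrite -val_eqE /= inordK.
  by move/eqP <-; rewrite inordK.
have := @card_draws (ordinal n) k; rewrite card_ord => <-.
by rewrite sum_nat_const cardsE.
Qed.

Lemma card_small_bound n p :
  #|[set S : {set 'I_n} | #|S| < p]| * 3 ^ (n - p) <= 4 ^ n.
Proof.
rewrite -sum_nat_const -sum_pow3 [X in _ <= X](bigID (mem [set S : {set 'I_n} | #|S| < p])) /=.
apply: leq_trans (leq_addr _ _); apply: leq_sum => S; rewrite inE => Sp.
by rewrite leq_pexp2l // leq_sub2l // ltnW.
Qed.


Lemma dist_card n (b b' : {set 'I_n}) :
  dist b b' + 2 * #|b :&: b'| = #|b| + #|b'|.
Proof.
rewrite /dist cardsU.
have -> : (b :\: b') :&: (b' :\: b) = finset.set0.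
  by apply/finset.setP => x; rewrite !inE; case: (x \in b); case: (x \in b').
rewrite finset.cards0 subn0 !cardsD [b' :&: b]finset.setIC.
have h1 : #|b :&: b'| <= #|b| by apply: subset_leq_card; apply: finset.subsetIl.
have h2 : #|b :&: b'| <= #|b'| by apply: subset_leq_card; apply: finset.subsetIr.
lia.
Qed.

Lemma dist_pos n (b b' : {set 'I_n}) : b != b' -> 0 < dist b b'.
Proof.
move=> ne; rewrite lt0n; apply: contra ne => /eqP /cards0_eq E.
apply/eqP/finset.setP => x; have := congr1 (fun A : {set 'I_n} => x \in A) E.
by rewrite !inE; case: (x \in b); case: (x \in b').
Qed.

Lemma dist_small n (j0 : 'I_n) (b b' : {set 'I_n}) :
  (j0 \in b) = (j0 \in b') -> dist b b' <= n.-1.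
Proof.
move=> e; have := cardsC1 j0; rewrite card_ord => <-; apply: subset_leq_card.
apply/fintype.subsetP => x; rewrite !inE; apply: contraTneq => ->.
by rewrite e; case: (j0 \in b').
Qed.

Lemma dist_even n (b b' : {set 'I_n}) :
  odd #|b| = odd #|b'| -> ~~ odd (dist b b').
Proof.
move=> e; have := congr1 odd (dist_card b b').
rewrite oddD oddD e addbb mul2n odd_double addbF => ->; done.
Qed.

Lemma arith_p p d : prime p -> odd p -> ~~ odd d -> 0 < d -> d <= (4 * p).-1 ->
  d != 2 * p -> ~~ (p %| d).
Proof.
move=> pp op ed d0 dn d2; apply/negP => /dvdnP [m dE].
have p0 := prime_gt0 pp.
move: ed; rewrite dE oddM op andbT => em.
have := odd_double_half m; rewrite (negbTE em) add0n => mE.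
move: dE; rewrite -mE; case: (m./2) => [|[|q]] dE; move: d0 d2 dn; rewrite dE; nia.
Qed.

Lemma indep_bound p (I : {set {set 'I_(4 * p)}}) : prime p -> odd p ->
  (forall b b', b \in I -> b' \in I -> b != b' -> dist b b' != 2 * p) ->
  #|I| <= 4 * #|[set S : {set 'I_(4 * p)} | #|S| < p]|.
Proof.
move=> pp op HI.
have n0 : 0 < 4 * p by rewrite muln_gt0 (prime_gt0 pp).
pose j0 : 'I_(4 * p) := Ordinal n0.
pose cl (b : {set 'I_(4 * p)}) := (j0 \in b, odd #|b|).
rewrite -sum1_card (partition_big cl xpredT) //=.
have -> : 4 * #|[set S : {set 'I_(4 * p)} | #|S| < p]| =
          \sum_(c : bool * bool) #|[set S : {set 'I_(4 * p)} | #|S| < p]|.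
  by rewrite sum_nat_const card_prod card_bool.
apply: leq_sum => c _; rewrite sum1_card.
have -> : #|[pred b | (b \in I) && (cl b == c)]| = #|[set b in I | cl b == c]|.
  by rewrite cardsE.
apply: (@FW _ _ pp) => b b'; rewrite !inE => /andP[bI /eqP bc] /andP[b'I /eqP b'c] ne.
have [e1 e2] : (j0 \in b) = (j0 \in b') /\ odd #|b| = odd #|b'|.
  by rewrite -b'c in bc; case: bc.
apply: arith_p => //.
- exact: dist_even.
- exact: dist_pos.
- exact: dist_small e1.
- exact: HI.
Qed.

End NatPart1.


Section Growth.
Local Open Scope nat_scope.

Lemma binom_lb p m : m <= p -> p ^ m <= 'C(p, m) * m ^ m.
Proof.
move=> mp.
rewrite -(leq_pmul2r (fact_gt0 m)) -mulnA [m ^ m * _]mulnC mulnA bin_ffact.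
have e1 : p ^ m = \prod_(i < m) p by rewrite prod_nat_const card_ord.
have e2 : m ^ m = \prod_(i < m) m by rewrite prod_nat_const card_ord.
rewrite -ffactnn !ffact_prod e1 e2 -!big_split /=.
apply: leq_prod => i _.
have := ltn_ord i; nia.
Qed.

Lemma growth N : exists p, [/\ prime p, 2 < p &
  4 * 16 ^ p * (4 * p) ^ N < 27 ^ p].
Proof.
set Q := 16 ^ N.+1 * N.+1 ^ N.+1.
set c := 4 * 4 ^ N.
have [p Kp pp] := prime_above (c * Q + N + 3).
exists p; split => //; first by lia.
have Np : N.+1 <= p by lia.
have Np' : N.+1 < p.+1 by rewrite ltnS.
have h1 : 'C(p, N.+1) * 16 ^ (p - N.+1) <= 27 ^ p.
  rewrite (_ : 27 = 16 + 11) // expnDn (bigD1 (Ordinal Np')) //=.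
  apply: leq_trans (leq_addr _ _) ; rewrite mulnA leq_pmulr //.
  by rewrite expn_gt0.
have h3 := binom_lb Np.
have e16 : 16 ^ p = 16 ^ (p - N.+1) * 16 ^ N.+1 by rewrite -expnD subnK.
have h2 : p ^ N.+1 * 16 ^ p <= 27 ^ p * Q.
  rewrite e16 /Q.
  move: h1 h3; set a := 'C(p, N.+1); set b := 16 ^ (p - N.+1); set d := 16 ^ N.+1;
    set e := N.+1 ^ N.+1; set Y := 27 ^ p; set P := p ^ N.+1 => h1 h3.
  have := leq_mul h3 (leqnn (b * d)); move/leq_trans; apply.
  have := leq_mul h1 (leqnn (d * e)).
  move/(leq_trans _); apply; lia.
rewrite expnMn expnS in h2 *.
have X0 : 0 < 16 ^ p by rewrite expn_gt0.
have P0 : 0 < p ^ N by rewrite expn_gt0; lia.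
move: h2 Kp X0 P0; rewrite /c; set X := 16 ^ p; set P := p ^ N; set Y := 27 ^ p;
  set F := 4 ^ N => h2 Kp X0 P0.
nia.
Qed.
End Growth.

Local Open Scope ring_scope.

Section Cohom.
Variables (R : realType) (G : graph) (d : nat).
Variable phi : 'I_(gn G) -> 'I_d -> R[i].
Hypothesis phi1 : forall x, \sum_j conjc (phi x j) * phi x j = 1.
Hypothesis phi0 : forall x y, ~~ gsim x y -> \sum_j conjc (phi x j) * phi y j = 0.

Definition Emat (x : 'I_(gn G)) : 'M[R[i]]_(d, gn G) :=
  \matrix_(j, k) (phi x j *+ (k == x)).

Lemma EmatM x y : adjmx (Emat x) *m Emat y =
  (\sum_j conjc (phi x j) * phi y j) *: delta_mx x y.
Proof.
apply/matrixP => k l; rewrite !mxE mulr_suml; apply: eq_bigr => j _.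
rewrite !mxE rmorphMn /=.
by case: (k == x); case: (l == y); rewrite ?mulr0n ?mulr1n ?mulr0 ?mul0r ?mulr1.
Qed.

Lemma hat_le_Cd : ncg_le (hatG R G) (Cd R d).
Proof.
exists [seq Emat x | x <- enum 'I_(gn G)]; split.
  rewrite big_map big_enum /= mx1_sum_delta; apply: eq_bigr => x _.
  by rewrite EmatM phi1 scale1r.
move=> E E' /mapP[x _ ->] /mapP[y _ ->] X.
rewrite /in_sp /= genmxE => /sub_rVP [a XE].
have -> : X = a *: 1%:M by rewrite -(mxvecK X) XE linearZ /= mxvecK.
rewrite -scalemxAr mulmx1 -scalemxAl EmatM scalerA.
case sxy : (gsim x y); last by rewrite phi0 ?sxy // mulr0 scale0r linear0 sub0mx.
rewrite linearZ /= scalemx_sub //.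
apply: (sumsmx_sup x) => //; apply: (sumsmx_sup y) => //.
by rewrite genmxE.
Qed.
End Cohom.

Local Open Scope ring_scope.

Lemma chi_lb (R : realType) (K : graph) (a : nat) : (0 < a)%N ->
  (forall I : {set 'I_(gn K)}, independent I -> (#|I| <= a)%N) ->
  (gn K)%:R / a%:R <= chi_f R K.
Proof.
move=> a0 Ha; apply: lb_le_inf.
  pose w0 (I : {set 'I_(gn K)}) : R := (#|I| == 1%N)%:R.
  exists (\sum_I w0 I), w0 => //; split.
  - by move=> I; rewrite /w0 ler0n.
  - move=> I nI; rewrite /w0; case: cards1P => // -[x Ix]; case/negP: nI.
    by rewrite Ix; apply/forallP => y; apply/implyP; rewrite inE => /eqP ->;
      apply/forallP => z; apply/implyP; rewrite inE => /eqP ->; rewrite gadj_irr.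
  - move=> v; rewrite (bigD1 [set v]) ?inE ?eqxx //= /w0 cards1 eqxx lerDl.
    by apply: sumr_ge0 => I _; rewrite ler0n.
move=> y [w [w0 wi wc] <-].
have a0' : (0 : R) < a%:R by rewrite ltr0n.
rewrite ler_pdivrMr // mulrC.
have -> : (gn K)%:R = \sum_(v : 'I_(gn K)) (1 : R).
  by rewrite sumr_const card_ord.
apply: le_trans (ler_sum _ (fun v _ => wc v)) _.
rewrite (exchange_big_dep xpredT) //= mulr_sumr; apply: ler_sum => I _.
rewrite sumr_const; case: (boolP (independent I)) => iI; last by rewrite wi // mul0rn mulr0.
rewrite -[w I *+ _]mulr_natr mulrC; apply: ler_pM => //.
by rewrite ler_nat; apply: Ha.
Qed.

Lemma card_setT n : #|{set 'I_n}| = (2 ^ n)%N.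
Proof. by rewrite -cardsT -powersetT card_powerset cardsT card_ord. Qed.

Lemma dist_sym n (b z : {set 'I_n}) : dist b z = dist z b.
Proof. by rewrite /dist finset.setUC. Qed.

Section Had.
Variable p : nat.
Local Notation n := (4 * p)%N.

Definition vs (x : 'I_#|{set 'I_n}|) : {set 'I_n} := enum_val x.

Definition had_adj : rel 'I_#|{set 'I_n}| :=
  fun x y => (x != y) && (dist (vs x) (vs y) != (2 * p)%N).

Lemma had_sym : symmetric had_adj.
Proof. by move=> x y; rewrite /had_adj eq_sym dist_sym. Qed.

Lemma had_irr : irreflexive had_adj.
Proof. by move=> x; rewrite /had_adj eqxx. Qed.

Definition Hgraph : graph := Graph had_sym had_irr.

Definition Mp := #|[set S : {set 'I_n} | (#|S| < p)%N]|.

Lemma Hgraph_chi (R : realType) : prime p -> odd p ->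
  (2 ^ n)%:R / (4 * Mp)%:R <= chi_f_bar R Hgraph.
Proof.
move=> pp op.
have M0 : (0 < Mp)%N.
  by apply/card_gt0P; exists finset.set0; rewrite inE cards0 prime_gt0.
rewrite -card_setT; apply: (@chi_lb R (gcompl Hgraph)); first by rewrite muln_gt0.
move=> I iI; rewrite -(card_imset I (@enum_val_inj _ _)).
apply: indep_bound => // b b' /imsetP[x xI ->] /imsetP[y yI ->] ne.
have := forallP iI x; rewrite xI /= => /forallP /(_ y); rewrite yI /=.
have xy : x != y by apply: contraNneq ne => ->.
rewrite /compl_adj xy /= negbK.
by case/andP.
Qed.

Definition sgn (R : realType) (s : R) (b : {set 'I_n}) (j : 'I_n) : R :=
  if j \in b then - s else s.

Lemma sgn_sum (R : realType) (s : R) (b b' : {set 'I_n}) :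
  \sum_j sgn s b j * sgn s b' j = s ^+ 2 * (n%:R - 2 * (dist b b')%:R).
Proof.
have -> : (dist b b')%:R = \sum_(j : 'I_n) ((j \in (b :\: b') :|: (b' :\: b)) : nat)%:R :> R.
  by rewrite /dist -sum1_card big_mkcond natr_sum; apply: eq_bigr => j _; case: ifP.
have -> : n%:R = \sum_(j : 'I_n) (1 : R) by rewrite sumr_const card_ord.
rewrite mulr_sumr -sumrB mulr_sumr.
apply: eq_bigr => j _; rewrite /sgn !inE.
case: (j \in b); case: (j \in b') => /=; rewrite ?mulr0 ?subr0 ?mulr1 ?mulNr ?mulrN ?opprK ?expr2 //.
all: ring.
Qed.
End Had.

Local Open Scope complex_scope.

Lemma Had_le (R : realType) p : (0 < p)%N ->
  ncg_le (hatG R (Hgraph p)) (Cd R (4 * p)).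
Proof.
move=> p0.
set s : R := Num.sqrt ((4 * p)%:R^-1).
have n0 : ((4 * p)%:R : R) != 0 by rewrite pnatr_eq0 -lt0n muln_gt0.
have s2 : s ^+ 2 = (4 * p)%:R^-1 by rewrite sqr_sqrtr // invr_ge0 ler0n.
have sumC : forall x y : 'I_(gn (Hgraph p)),
    \sum_j conjc ((sgn s (vs x) j)%:C) * (sgn s (vs y) j)%:C
    = (s ^+ 2 * ((4 * p)%:R - 2 * (dist (vs x) (vs y))%:R))%:C.
  move=> x y; rewrite -sgn_sum rmorph_sum; apply: eq_bigr => j _.
  by rewrite conjc_real rmorphM.
apply: (@hat_le_Cd R (Hgraph p) (4 * p) (fun x j => (sgn s (vs x) j)%:C)).
  move=> x; rewrite sumC /dist finset.setDv finset.setU0 cards0 mulr0 subr0 s2 mulVf //.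
move=> x y; rewrite /gsim negb_or => /andP[xy]; rewrite /= /had_adj xy /= negbK.
move=> /eqP dE; rewrite sumC dE (_ : (4 * p)%N = (2 * (2 * p))%N); last by rewrite mulnA.
by rewrite natrM subrr mulr0.
Qed.

Local Close Scope complex_scope.

Definition rel0 (m : nat) : rel 'I_m := fun _ _ => false.
Lemma rel0_sym m : symmetric (@rel0 m). Proof. by []. Qed.
Lemma rel0_irr m : irreflexive (@rel0 m). Proof. by []. Qed.
Definition Gempty (m : nat) : graph := Graph (@rel0_sym m) (@rel0_irr m).

Lemma hat_G0 (R : realType) : hatG R (Gempty 0) = ncg0 R.
Proof. by rewrite /hatG /ncg0; congr NCG; apply: flatmx0. Qed.

Lemma inA_realize (R : realType) k Gs : (0 < k)%N -> inA (realize_from R k Gs).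
Proof.
elim: Gs k => [|G Gs IH] k k0 /=; first by rewrite -hat_G0; exact: inA_graph.
apply: inA_dsum; last exact: IH.
by apply: inA_tens; [exact: inA_graph | exact: inA_Cd].
Qed.

Lemma f_K1 (R : realType) : 1 <= chi_f_bar R (Gempty 1).
Proof.
have := @chi_lb R (gcompl (Gempty 1)) 1 isT.
rewrite /= divr1; apply => I _.
by have := max_card (mem I); rewrite card_ord.
Qed.

Unset Implicit Arguments.
Theorem proposition3p6 (R : realType) (alpha : R) :
  1 <= alpha ->
  ~ exists F : ncg R -> R,
      DeltaA F /\
      forall Gs : seq graph, F (realize R Gs) = f_alpha (chi_f_bar R) alpha Gs.
Proof.
move=> a1 [F [[Finv Fnn [F0 F1] [Fadd Fmul] Fmono] HF]].
set f := chi_f_bar R.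
have inA0 : inA (ncg0 R) by rewrite -hat_G0; exact: inA_graph.
have Fsingle : forall G, F (hatG R G) = f G.
  move=> G; have := HF [:: G]; rewrite /realize /f_alpha /=.
  rewrite Fadd //; last by apply: inA_tens; [exact: inA_graph | exact: inA_Cd].
  rewrite Fmul //; [|exact: inA_graph|exact: inA_Cd].
  by rewrite F0 F1 mulr1 addr0 powR1 mulr1 addr0.
have f0 : f (Gempty 0) = 0 by rewrite -Fsingle hat_G0 F0.
have chain : forall m k, (0 < k)%N ->
    F (realize_from R k (nseq m (Gempty 0) ++ [:: Gempty 1])) =
      F (hatG R (Gempty 1)) * F (Cd R (k + m)) /\
    f_alpha_from f alpha k (nseq m (Gempty 0) ++ [:: Gempty 1]) =
      f (Gempty 1) * (k + m)%:R `^ alpha.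
  elim=> [|m IH] k k0 /=.
    rewrite addn0 Fadd //; last by apply: inA_tens; [exact: inA_graph | exact: inA_Cd].
    by rewrite Fmul //; [rewrite F0 !addr0 | exact: inA_graph | exact: inA_Cd].
  have [IH1 IH2] := IH k.+1 isT.
  rewrite Fadd //; last 2 first.
  - by apply: inA_tens; [exact: inA_graph | exact: inA_Cd].
  - exact: inA_realize.
  rewrite Fmul //; [|exact: inA_graph|exact: inA_Cd].
  by rewrite hat_G0 F0 mul0r add0r IH1 f0 mul0r add0r IH2 addSnnS.
have FCd : forall m, F (Cd R m.+1) = (m.+1)%:R `^ alpha.
  move=> m; have [c1 c2] := chain m 1%N isT.
  have := HF (nseq m (Gempty 0) ++ [:: Gempty 1]).
  rewrite /realize /f_alpha c1 c2 Fsingle add1n => /mulfI; apply.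
  by apply/negP => /eqP e; have := f_K1 R; rewrite -/f e ler10.
have a0 : 0 <= alpha by apply: le_trans a1.
set N := Num.Def.archi_bound alpha.
have aN := archi_boundP a0.
have [p [pp p2 gr]] := growth N.
have op : odd p by case: (even_prime pp) => // e; rewrite e in p2.
have p0 : (0 < p)%N := prime_gt0 pp.
have up : f (Hgraph p) <= ((4 * p) ^ N)%:R.
  have n0 : (0 < 4 * p)%N by rewrite muln_gt0.
  have := Fmono _ _ (inA_graph _ (Hgraph p)) (@inA_Cd R _ n0) (Had_le R p0).
  rewrite Fsingle => /le_trans; apply.
  rewrite -(prednK (_ : (0 < 4 * p)%N)) ?muln_gt0 // FCd prednK ?muln_gt0 //.
  apply: le_trans (ler_powR _ (ltW aN)) _; first by rewrite ler1n muln_gt0.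
  by rewrite powR_mulrn // natrX.
have lo := Hgraph_chi R pp op.
have nat_ineq : (4 * Mp p * (4 * p) ^ N < 2 ^ (4 * p))%N.
  have cb := card_small_bound (4 * p) p.
  rewrite -/(Mp p) (_ : (4 * p - p = 3 * p)%N) in cb; last by lia.
  rewrite expnM (expnM 4 4) (expnM 2 4) /= in cb *.
  rewrite (_ : 256 ^ p = 16 ^ p * 16 ^ p)%N in cb; last by rewrite -expnMn.
  move: cb gr; set M := Mp p; set X := (16 ^ p)%N; set Y := (27 ^ p)%N;
    set Z := ((4 * p) ^ N)%N => cb gr.
  nia.
have : ((4 * p) ^ N)%:R < (2 ^ (4 * p))%:R / (4 * Mp p)%:R :> R.
  have M0 : (0 < 4 * Mp p)%N.
    rewrite muln_gt0 /=; apply/card_gt0P; exists finset.set0.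
    by rewrite inE cards0.
  by rewrite ltr_pdivlMr ?ltr0n // -natrM ltr_nat mulnC.
by move/lt_le_trans/(_ (le_trans lo up)); rewrite ltxx.
Qed.
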